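(* Under Assumption A(b),(c) in setting (E), let $\omega\in(0,1]$, set $\widetilde S^{-1}:=Gx^0$ and for $k\ge0$ $$\widetilde S^k:=(1-\omega)\big[\widetilde S^{k-1}+2G_{\mathcal B_k}x^k-3G_{\mathcal B_k}x^{k-1}+G_{\mathcal B_k}x^{k-2}\big]+\omega\,\overline S^k_{\hat{\mathcal B}_k},$$ where $\mathcal B_k$ is a fresh i.i.d. mini-batch of size $b$, $\hat{\mathcal B}_k$ a fresh i.i.d. mini-batch of size $\hat b$ (possibly overlapping with $\mathcal B_k$), and $\overline S^k_{\hat{\mathcal B}_k}$ is built from $\hat{\mathcal B}_k$ with $\mathbb E_{\hat{\mathcal B}_k}[\overline S^k_{\hat{\mathcal B}_k}]=S^k$ and $\sigma_k^2:=\mathbb E_{\hat{\mathcal B}_k}\|\overline S^k_{\hat{\mathcal B}_k}-S^k\|^2$. Then $\widetilde S^k$ belongs to class (B) with $\Delta_k:=\|\widetilde S^k-S^k\|^2$, $\tau=\omega$, $\kappa=\omega(2-\omega)$, $\Theta=\frac{8C(1-\omega)^2L^2}{b}$, $\hat\Theta=\frac{2C(1-\omega)^2L^2}{b}$, $\delta_k=C\omega^2\sigma_k^2$, where $C=1$ if $\mathcal B_k$ and $\hat{\mathcal B}_k$ are independent and $C=2$ otherwise.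
   Context: Setting: $G:\mathbb{R}^p\to\mathbb{R}^p$, $T:\mathbb{R}^p\rightrightarrows\mathbb{R}^p$, $\Phi:=G+T$, $J_{\eta T}:=(\mathbb{I}+\eta T)^{-1}$. (E): $Gx=\mathbb{E}_{\zeta\sim\mathbb P}[\mathbf G(x,\zeta)]$. $G_{\mathcal B}x:=\frac1{|\mathcal B|}\sum_{\zeta\in\mathcal B}\mathbf G(x,\zeta)$; i.i.d. mini-batches are samples drawn i.i.d. from $\mathbb P$ independently of the past. Assumption A: (b) $\mathbb{E}_\zeta\|\mathbf G(x,\zeta)-Gx\|^2\le\sigma^2$; (c) $\mathbb{E}_\zeta\|\mathbf G(x,\zeta)-\mathbf G(y,\zeta)\|^2\le L^2\|x-y\|^2$. Scheme (VrFRBS): stepsize $\eta>0$, $x^0$, $x^{-2}=x^{-1}=x^0$, $\xi^0\in Tx^0$; for $k\ge0$: $S^k:=2Gx^k-Gx^{k-1}$, estimator $\widetilde S^k$, $x^{k+1}\in J_{\eta T}(x^k-\eta\widetilde S^k)$, $\xi^{k+1}:=\eta^{-1}(x^k-\eta\widetilde S^k-x^{k+1})\in Tx^{k+1}$; $e^k:=\widetilde S^k-S^k$. $\mathcal F_k$: $\sigma$-algebra of all randomness up to iteration $k$; $\mathbb E_k[\cdot]:=\mathbb E[\cdot\mid\mathcal F_k]$. Class (B): there exist nonnegative random variables $\Delta_k$ ($\Delta_{-1}:=0$), $\tau,\kappa\in(0,1]$, $\Theta,\hat\Theta\ge0$, nonnegative $\{\delta_k\}$ such that with $e^{-1}:=0$,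 a.s. for all $k\ge0$: $\mathbb E_k[e^k]=(1-\tau)e^{k-1}$; $\mathbb E_k\|e^k\|^2\le\mathbb E_k[\Delta_k]$; $\mathbb E_k[\Delta_k]\le(1-\kappa)\Delta_{k-1}+\Theta\|x^k-x^{k-1}\|^2+\hat\Theta\|x^{k-1}-x^{k-2}\|^2+\delta_k$. *)

(* Defs.v *)
From HB Require Import structures.
From mathcomp Require Import all_boot all_order all_algebra.
From mathcomp Require Import all_classical all_reals all_analysis.

Set Implicit Arguments.
Unset Strict Implicit.
Unset Printing Implicit Defensive.

Import Order.TTheory GRing.Theory Num.Theory.
Local Open Scope classical_set_scope.
Local Open Scope ring_scope.

Definition sqnorm (R : realType) (p : nat) (v : 'rV[R]_p) : R :=
  \sum_(i < p) (v ord0 i) ^+ 2.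

Definition GB (R : realType) (p : nat) (Z : Type) (b : nat)
  (Gs : 'rV[R]_p -> Z -> 'rV[R]_p) (B : 'I_b -> Z) (x : 'rV[R]_p) : 'rV[R]_p :=
  (b%:R)^-1 *: \sum_(j < b) Gs x (B j).

(** membership y \in J_{eta T}(z) = (I + eta T)^{-1}(z) *)
Definition in_resolvent (R : realType) (p : nat) (eta : R)
  (T : 'rV[R]_p -> set 'rV[R]_p) (z y : 'rV[R]_p) : Prop :=
  exists t, T y t /\ z = y + eta *: t.

(** zeta : 'I_n -> W -> Z is an i.i.d. sample of size n with law P under Q:
    every sample is measurable and the joint law of (zeta_0,..,zeta_{n-1})
    is the product law P^{(x) n} (equality on measurable rectangles). *)
Definition iid_batch (R : realType) (dW dZ : measure_display)
  (W : measurableType dW) (Z : measurableType dZ)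
  (Q : probability W R) (P : probability Z R) (n : nat)
  (zeta : 'I_n -> W -> Z) : Prop :=
  (forall j, measurable_fun setT (zeta j)) /\
  forall A : 'I_n -> set Z, (forall j, measurable (A j)) ->
    Q (\bigcap_(j in [set: 'I_n]) (zeta j @^-1` A j)) = (\prod_(j < n) P (A j))%E.

Definition gen_sigma (dZ : measure_display) (W : Type) (Z : measurableType dZ)
  (n : nat) (zeta : 'I_n -> W -> Z) : set (set W) :=
  <<s \bigcup_(j in [set: 'I_n]) preimage_set_system setT (zeta j) measurable >>.

Definition measurable_wrt (R : realType) (W : Type) (F : set (set W)) (f : W -> R)
  : Prop :=
  forall V : set R, measurable V -> F (f @^-1` V).

Definition indep_sigma (R : realType) (dW : measure_display) (W : measurableType dW)
  (Q : probability W R) (F1 F2 : set (set W)) : Prop :=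
  forall A B, F1 A -> F2 B -> Q (A `&` B) = (Q A * Q B)%E.

(* Histories: a run is a sequence h : nat -> W of fresh randomness,    *)
(* h k being the randomness drawn at iteration k (batches B_k, ^B_k).  *)
(* F_k = sigma(h 0, ..., h (k-1)).                                      *)

(** f is F_k-measurable, i.e. depends only on h 0, ..., h (k-1) *)
Definition adapted_at (W T : Type) (k : nat) (f : (nat -> W) -> T) : Prop :=
  forall h h', (forall j, (j < k)%N -> h j = h' j) -> f h = f h'.

Definition upd (W : Type) (h : nat -> W) (k : nat) (w : W) : nat -> W :=
  fun j => if j == k then w else h j.

(** E_k for real random variables: integrate the fresh randomness of
    iteration k (law Q, independent of F_k) with the past frozen. *)
Definition Ek (R : realType) (dW : measure_display) (W : measurableType dW)
  (Q : probability W R) (k : nat) (Y : (nat -> W) -> R) (h : nat -> W) : R :=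
  Rintegral Q setT (fun w => Y (upd h k w)).

Definition Ek_nn (R : realType) (dW : measure_display) (W : measurableType dW)
  (Q : probability W R) (k : nat) (Y : (nat -> W) -> R) (h : nat -> W) : \bar R :=
  (\int[Q]_w (Y (upd h k w))%:E)%E.

(* x k = x^k; x (k.-1) = x^{k-1} and x (k.-2) = x^{k-2} with the       *)
(* convention x^{-1} = x^{-2} = x^0 (truncated subtraction on nat).    *)

Definition Sk (R : realType) (p : nat) (W : Type) (G : 'rV[R]_p -> 'rV[R]_p)
  (x : nat -> (nat -> W) -> 'rV[R]_p) (k : nat) (h : nat -> W) : 'rV[R]_p :=
  2%:R *: G (x k h) - G (x k.-1 h).

(** ~S^k, with ~S^{-1} = G x^0 and
    ~S^k = (1-om)[~S^{k-1} + 2 G_{B_k} x^k - 3 G_{B_k} x^{k-1} + G_{B_k} x^{k-2}]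
           + om Sbar^k,
    where B_k = zeta (h k) and Sbar k h = Sbar^k_{^B_k}. *)
Fixpoint Stil (R : realType) (p : nat) (dZ : measure_display) (W : Type)
  (Z : measurableType dZ) (b : nat)
  (Gs : 'rV[R]_p -> Z -> 'rV[R]_p) (G : 'rV[R]_p -> 'rV[R]_p)
  (om : R) (zeta : 'I_b -> W -> Z) (Sbar : nat -> (nat -> W) -> 'rV[R]_p)
  (x : nat -> (nat -> W) -> 'rV[R]_p) (k : nat) (h : nat -> W) : 'rV[R]_p :=
  let prev := match k with
              | 0 => G (x 0%N h)
              | k'.+1 => Stil Gs G om zeta Sbar x k' h
              end in
  let B := fun j => zeta j (h k) in
  (1 - om) *: (prev + 2%:R *: GB Gs B (x k h) - 3%:R *: GB Gs B (x k.-1 h)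
               + GB Gs B (x k.-2 h))
  + om *: Sbar k h.

(* Main.v *)
Require Import Defs.
From HB Require Import structures.
From mathcomp Require Import all_boot all_order all_algebra.
From mathcomp Require Import all_classical all_reals all_analysis.
From mathcomp Require Import measurable_realfun.
From mathcomp Require Import ring lra.
Import Order.TTheory GRing.Theory Num.Theory.
Local Open Scope classical_set_scope.
Local Open Scope ring_scope.
Import numFieldNormedType.Exports.

Section indep.
Local Open Scope ereal_scope.
Context {d} {W : measurableType d} {R : realType} {Q : probability W R}.
Context {f g : W -> R}.
Hypotheses (mf : measurable_fun setT f) (mg : measurable_fun setT g).
Hypothesis fgI : forall A B : set R, measurable A -> measurable B ->
  Q (f @^-1` A `&` g @^-1` B) = Q (f @^-1` A) * Q (g @^-1` B).
Hypotheses (intf : Q.-integrable setT (EFin \o f))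
           (intg : Q.-integrable setT (EFin \o g)).

Let Fm : {mfun W >-> R} := HB.pack f (isMeasurableFun.Build _ _ _ _ f mf).
Let Gm : {mfun W >-> R} := HB.pack g (isMeasurableFun.Build _ _ _ _ g mg).
Let H := fun w => (f w, g w).
Let mH : measurable_fun setT H := measurable_fun_pair mf mg.
Let Hm : {mfun W >-> (R * R)%type} := HB.pack H (isMeasurableFun.Build _ _ _ _ H mH).
Let muf := distribution Q Fm.
Let mug := distribution Q Gm.
Let muH := distribution Q Hm.

Let prodE X : measurable X -> (muf \x mug) X = muH X.
Proof.
apply: product_measure_unique => A B mA mB.
by rewrite /muH /muf /mug /distribution /pushforward /= -fgI.
Qed.

Let phi2 := fun z : (R * R)%type => (z.1 * z.2)%R.
Let phi := EFin \o phi2.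
Let mphi : measurable_fun setT phi.
Proof.
apply/measurable_EFinP; apply: measurable_funM;
  [exact: measurable_fst | exact: measurable_snd].
Qed.

Lemma indep_abs : \int[Q]_w `|(f w * g w)%:E| =
  \int[Q]_w `|(f w)%:E| * \int[Q]_w `|(g w)%:E|.
Proof.
have mphia : measurable_fun setT (abse \o phi) by apply: measurableT_comp.
transitivity (\int[muH]_z (abse \o phi) z).
  by rewrite (ge0_integral_distribution Hm mphia) // => y; exact: abse_ge0.
rewrite (eq_measure_integral (muf \x mug)); last first.   by move=> A mA _; exact/esym/prodE.
rewrite fubini_tonelli1 //; last by move=> z; exact: abse_ge0.
rewrite /fubini_F /=.
transitivity (\int[muf]_x (`|x%:E| * \int[mug]_y `|y%:E|)).
  apply: eq_integral => x _.
  rewrite -ge0_integralZl //=; last by apply: measurableT_comp.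
  by apply: eq_integral => y _; rewrite /phi2 /= normrM EFinM.
rewrite ge0_integralZr //=; last 2 first.
- by apply: measurableT_comp.
- by apply: integral_ge0.
have mab : measurable_fun [set: R] (fun x : R => `|x%:E|) by apply: measurableT_comp.
rewrite (ge0_integral_distribution Fm mab) //.
by rewrite (ge0_integral_distribution Gm mab).
Qed.

Let int_id (F : {mfun W >-> R}) : Q.-integrable setT (EFin \o F) ->
  (distribution Q F).-integrable setT EFin.
Proof.
move=> /integrableP[_ hF]; apply/integrableP; split.
  by apply/measurable_EFinP; exact: measurable_id.
have mab : measurable_fun [set: R] (fun x : R => `|x%:E|) by apply: measurableT_comp.
by rewrite (ge0_integral_distribution F mab).
Qed.

Lemma indep_int : Q.-integrable setT (EFin \o (f \* g)%R).
Proof.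
apply/integrableP; split.
  by apply/measurable_EFinP; exact: measurable_funM.
move: intf intg => /integrableP[_ hf] /integrableP[_ hg].
rewrite /comp /=; rewrite indep_abs.
by apply: lte_mul_pinfty => //; [exact: integral_ge0|rewrite ge0_fin_numE//; exact: integral_ge0].
Qed.

Lemma indep_mul : \int[Q]_w (f w * g w)%:E =
  \int[Q]_w (f w)%:E * \int[Q]_w (g w)%:E.
Proof.
have phiint : (muf \x mug).-integrable setT phi.
  apply/integrableP; split => //.
  have mphia : measurable_fun setT (abse \o phi) by apply: measurableT_comp.
  rewrite (eq_measure_integral muH); last by move=> A mA _; exact: prodE.
  rewrite (ge0_integral_distribution Hm mphia) //; last by move=> y; exact: abse_ge0.
  by case/integrableP: indep_int.
transitivity (\int[muH]_z phi z).
  by rewrite (integral_distribution (X:=Hm)) //; exact: indep_int.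
rewrite (eq_measure_integral (muf \x mug)); last first.
  by move=> A mA _; exact/esym/prodE.
rewrite -(integral12_prod_meas1 phiint) /fubini_F /=.
transitivity (\int[muf]_x (x%:E * \int[mug]_y y%:E)).
  congr (integral _ _ _); apply: funext => x; rewrite -integralZl //; last exact: int_id.
have cfin : (\int[mug]_y y%:E) \is a fin_num.
  exact: (integrable_fin_num measurableT (@int_id Gm intg)).
rewrite -(fineK cfin) integralZr //; last exact: (@int_id Fm intf).
rewrite fineK //.
rewrite (integral_distribution (X:=Fm)) //.
by rewrite (integral_distribution (X:=Gm)).
Qed.
End indep.

Section iid.
Local Open Scope ereal_scope.
Context {dW} {W : measurableType dW} {dZ} {Z : measurableType dZ} {R : realType}
  {Q : probability W R} {P : probability Z R} {n : nat} {zeta : 'I_n -> W -> Z}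
  (hz : iid_batch Q P zeta).

Lemma iid_meas j : measurable_fun setT (zeta j).
Proof. exact: hz.1. Qed.

Lemma iid_law1 j A : measurable A -> Q (zeta j @^-1` A) = P A.
Proof.
move=> mA.
have := hz.2 (fun l => if l == j then A else setT).
rewrite (_ : \bigcap_(l in _) _ = zeta j @^-1` A); last first.
  apply/seteqP; split => [w /= H|w /= Hw l _ /=].
    by have := H j I; rewrite eqxx.
  by case: ifPn => // /eqP ->.
rewrite (bigD1 j) //= eqxx big1 ?mule1; last first.
  by move=> l /negbTE ->; exact: probability_setT.
by apply => l; case: ifPn.
Qed.

Lemma iid_law2 j l A B : j != l -> measurable A -> measurable B ->
  Q (zeta j @^-1` A `&` zeta l @^-1` B) = P A * P B.
Proof.
move=> jl mA mB.
have := hz.2 (fun m => if m == j then A else if m == l then B else setT).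
rewrite (_ : \bigcap_(m in _) _ = zeta j @^-1` A `&` zeta l @^-1` B); last first.
  apply/seteqP; split => [w /= H|w /= [Hw1 Hw2] m _ /=].
    split; first by have := H j I; rewrite eqxx.
    by have := H l I; rewrite eq_sym (negbTE jl) eqxx.
  case: ifPn => [/eqP -> //|_]; by case: ifPn => // /eqP ->.
rewrite (bigD1 j) //= eqxx (bigD1 l) //=; last by rewrite eq_sym.
rewrite eq_sym (negbTE jl) eqxx big1 ?mule1; last first.
  by move=> m /andP[/negbTE -> /negbTE ->]; exact: probability_setT.
by apply => m; case: ifPn => // _; case: ifPn.
Qed.

Let Zm j : {mfun W >-> Z} := HB.pack (zeta j) (isMeasurableFun.Build _ _ _ _ (zeta j) (iid_meas j)).

Let distE j A : measurable A -> distribution Q (Zm j) A = P A.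
Proof. by move=> mA; rewrite /distribution /pushforward /= iid_law1. Qed.

Lemma iid_ge0 j {psi : Z -> \bar R} : measurable_fun setT psi -> (forall z, 0 <= psi z) ->
  \int[Q]_w psi (zeta j w) = \int[P]_z psi z.
Proof.
move=> mpsi psi0.
rewrite -[LHS](ge0_integral_distribution (Zm j)) //.
by apply: eq_measure_integral => A mA _; exact: distE.
Qed.

Lemma iid_int j {phi : Z -> R} : measurable_fun setT phi ->
  P.-integrable setT (EFin \o phi) ->
  Q.-integrable setT (EFin \o (phi \o zeta j)) /\
  \int[Q]_w (phi (zeta j w))%:E = \int[P]_z (phi z)%:E.
Proof.
move=> mphi /integrableP[_ hp].
have iQ : Q.-integrable setT (EFin \o (phi \o zeta j)).
  apply/integrableP; split.
    by apply/measurable_EFinP; apply: measurableT_comp => //; exact: iid_meas.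
  rewrite (@iid_ge0 j (fun z => `|(phi z)%:E|)) //.
  by apply: measurableT_comp => //; apply/measurable_EFinP.
split => //.
transitivity (\int[distribution Q (Zm j)]_z (phi z)%:E).
  by rewrite (integral_distribution (X := Zm j)) //; exact/measurable_EFinP.
by apply: eq_measure_integral => A mA _; exact: distE.
Qed.

Lemma iid_pair j l {phi psi : Z -> R} : j != l ->
  measurable_fun setT phi -> measurable_fun setT psi ->
  P.-integrable setT (EFin \o phi) -> P.-integrable setT (EFin \o psi) ->
  Q.-integrable setT (EFin \o ((phi \o zeta j) \* (psi \o zeta l))%R) /\
  \int[Q]_w (phi (zeta j w) * psi (zeta l w))%:E =
  \int[P]_z (phi z)%:E * \int[P]_z (psi z)%:E.
Proof.
move=> jl mphi mpsi iphi ipsi.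
have [i1 e1] := @iid_int j phi mphi iphi.
have [i2 e2] := @iid_int l psi mpsi ipsi.
have m1 : measurable_fun setT (phi \o zeta j).
  by apply: measurableT_comp => //; exact: iid_meas.
have m2 : measurable_fun setT (psi \o zeta l).
  by apply: measurableT_comp => //; exact: iid_meas.
have hI : forall A B : set R, measurable A -> measurable B ->
    Q ((phi \o zeta j) @^-1` A `&` (psi \o zeta l) @^-1` B) =
    Q ((phi \o zeta j) @^-1` A) * Q ((psi \o zeta l) @^-1` B).
  move=> A B mA mB.
  have mA' : measurable (phi @^-1` A) by rewrite -[_ @^-1` _]setTI; exact: mphi.
  have mB' : measurable (psi @^-1` B) by rewrite -[_ @^-1` _]setTI; exact: mpsi.
  change (Q (zeta j @^-1` (phi @^-1` A) `&` zeta l @^-1` (psi @^-1` B)) =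
    Q (zeta j @^-1` (phi @^-1` A)) * Q (zeta l @^-1` (psi @^-1` B))).
  by rewrite iid_law2 // !iid_law1.
split; first exact: (indep_int m1 m2 hI i1 i2).
by rewrite (indep_mul m1 m2 hI i1 i2) e1 e2.
Qed.
End iid.

Section intR.
Context {d} {W : measurableType d} {R : realType} {Q : probability W R}.

Definition intR (f : W -> R) := Q.-integrable setT (EFin \o f).
Definition RI (f : W -> R) := \int[Q]_w f w.

Lemma intR_meas {f} : intR f -> measurable_fun setT f.
Proof. by case/integrableP => /measurable_EFinP. Qed.

Lemma eqI {F G : W -> \bar R} : Q.-integrable setT F -> (forall w, F w = G w) ->
  Q.-integrable setT G.
Proof. by move=> hF h; apply: (eq_integrable _ F) => // w _; rewrite h. Qed.

Lemma intRD {f g} : intR f -> intR g -> intR (fun w => f w + g w).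
Proof.
move=> hf hg; apply: (eqI (integrableD measurableT hf hg)) => w.
by rewrite /= EFinD.
Qed.

Lemma intRZ k {f} : intR f -> intR (fun w => k * f w).
Proof.
move=> hf; apply: (eqI (integrableZl measurableT k hf)) => w.
by rewrite /= EFinM.
Qed.

Lemma intRN {f} : intR f -> intR (fun w => - f w).
Proof.
move=> hf; have h := intRZ (-1) hf; apply: (eqI (h : Q.-integrable _ _)) => w.
by rewrite /= mulN1r.
Qed.

Lemma intRB {f g} : intR f -> intR g -> intR (fun w => f w - g w).
Proof. by move=> hf hg; apply: intRD => //; exact: intRN. Qed.

Lemma intR_cst k : intR (fun _ => k).
Proof. exact: finite_measure_integrable_cst. Qed.

Lemma RID {f g} : intR f -> intR g -> RI (fun w => f w + g w) = RI f + RI g.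
Proof. by move=> hf hg; rewrite /RI RintegralD. Qed.

Lemma RIZ k {f} : intR f -> RI (fun w => k * f w) = k * RI f.
Proof. by move=> hf; rewrite /RI RintegralZl. Qed.

Lemma RIB {f g} : intR f -> intR g -> RI (fun w => f w - g w) = RI f - RI g.
Proof. by move=> hf hg; rewrite /RI RintegralB. Qed.

Lemma RI_cst k : RI (fun _ => k) = k.
Proof. rewrite /RI Rintegral_cst // [fine _](_ : _ = 1) ?mulr1 //. exact: (congr1 fine (probability_setT Q)). Qed.

Lemma RIE {f} : intR f -> (\int[Q]_w (f w)%:E)%E = (RI f)%:E.
Proof. by move=> hf; rewrite /RI /Rintegral fineK //; exact: integrable_fin_num. Qed.

Lemma eq_intR {f g} : (forall w, f w = g w) -> intR f -> intR g.
Proof. by move=> fg hf; apply: (eqI (hf : Q.-integrable _ _)) => w; rewrite /= fg. Qed.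

Lemma eq_RI {f} g : (forall w, f w = g w) -> RI f = RI g.
Proof. by move=> fg; rewrite /RI; apply: eq_Rintegral => w _; rewrite fg. Qed.

Lemma intR_sum {I : Type} (s : seq I) (h : I -> W -> R) :
  (forall i, intR (h i)) ->
  intR (fun w => \sum_(i <- s) h i w) /\
  RI (fun w => \sum_(i <- s) h i w) = \sum_(i <- s) RI (h i).
Proof.
move=> hh; elim: s => [|i s [ih1 ih2]].
  split.
    by apply: (eq_intR _ (intR_cst 0)) => w; rewrite big_nil.
  by rewrite (eq_RI (fun _ => 0)) ?RI_cst ?big_nil // => w; rewrite big_nil.
split.
  by apply: (eq_intR _ (intRD (hh i) ih1)) => w; rewrite big_cons.
rewrite (eq_RI (fun w => h i w + \sum_(j <- s) h j w)); last first.
  by move=> w; rewrite big_cons.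
by rewrite RID // ih2 big_cons.
Qed.

Lemma intR_ge0 (f : W -> R) : measurable_fun setT f -> (forall w, 0 <= f w) ->
  (\int[Q]_w (f w)%:E < +oo)%E -> intR f.
Proof.
move=> mf f0 fin; apply/integrableP; split; first exact/measurable_EFinP.
apply: le_lt_trans fin; apply: ge0_le_integral => //.
- by apply: measurableT_comp => //; exact/measurable_EFinP.
- exact/measurable_EFinP.
- by move=> w _; rewrite /comp abse_EFin lee_fin ger0_norm.
Qed.

Lemma intR_le {f g : W -> R} : measurable_fun setT f -> (forall w, `|f w| <= g w) -> intR g -> intR f.
Proof.
move=> mf fg hg; apply: (le_integrable measurableT (g := EFin \o g)) => //.
- exact/measurable_EFinP.
- by move=> w _; rewrite /comp !abse_EFin lee_fin (le_trans (fg w)) // ler_norm.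
Qed.

End intR.
Arguments intR {d W R} Q f.
Arguments RI {d W R} Q f.

Ltac solve_int :=
  repeat first [ assumption | apply: intRD | apply: intRZ | apply: intR_cst ].

Section comp_bound.
Context d (W : measurableType d) (R : realType) (Q : probability W R).

Lemma comp_bound (c C : R) (X Y : W -> R) :
  intR Q X -> intR Q (fun w => X w ^+ 2) -> RI Q X = 0 ->
  intR Q Y -> RI Q Y = 0 ->
  (C = 1 /\ (forall A B : set R, measurable A -> measurable B ->
     Q (X @^-1` A `&` Y @^-1` B) = (Q (X @^-1` A) * Q (Y @^-1` B))%E)) \/ C = 2 ->
  (\int[Q]_w ((c + X w + Y w) ^+ 2)%:E <=
   (c ^+ 2 + C * RI Q (fun w => X w ^+ 2))%:E + C%:E * \int[Q]_w ((Y w) ^+ 2)%:E)%E.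
Proof.
move=> iX iX2 EX iY EY hC.
have C0 : 0 < C by case: hC => [[-> _]|->].
have mX := intR_meas iX; have mY := intR_meas iY.
have mY2 : measurable_fun setT (fun w => Y w ^+ 2) by exact: measurable_funX.
have [Yfin|] := ltP (\int[Q]_w ((Y w) ^+ 2)%:E)%E +oo%E; last first.
  rewrite leye_eq => /eqP ->.
  by rewrite mulry gtr0_sg // mul1e addey // leey.
have iY2 : intR Q (fun w => Y w ^+ 2).
  by apply: intR_ge0 => // w; exact: sqr_ge0.
rewrite (RIE iY2).
have me : measurable_fun setT (fun w => (c + X w + Y w) ^+ 2).
  apply: measurable_funX; apply: measurable_funD => //.
  by apply: measurable_funD => //; exact: measurable_cst.
case: hC => [[C1 hI]|C2].
- have iXY : intR Q (fun w => X w * Y w).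
    exact: (indep_int mX mY hI iX iY).
  have EXY : RI Q (fun w => X w * Y w) = 0.
    have := (indep_mul mX mY hI iX iY).
    rewrite (RIE iXY) (RIE iX) EX mul0e => /eqP.
    by rewrite eqe => /eqP.
  pose H := fun w => c ^+ 2 + 2 * c * X w + 2 * c * Y w + X w ^+ 2 + Y w ^+ 2
    + 2 * (X w * Y w).
  have iH : intR Q H by rewrite /H; solve_int.
  rewrite (eq_integral (fun w => (H w)%:E)); last first.
    by move=> w _; rewrite /H; congr EFin; ring.
  rewrite (RIE iH) C1 mul1r mul1e -EFinD lee_fin.
  rewrite /H !RID; try solve_int.
  rewrite !RIZ; try solve_int. by rewrite !RI_cst EX EY EXY; lra.
- pose H := fun w => c ^+ 2 + 2 * c * X w + 2 * c * Y w + 2 * X w ^+ 2 + 2 * Y w ^+ 2.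
  have iH : intR Q H by rewrite /H; solve_int.
  apply: (@le_trans _ _ (\int[Q]_w (H w)%:E)%E).
    apply: ge0_le_integral => //.
    - by move=> w _; rewrite lee_fin sqr_ge0.
    - exact/measurable_EFinP.
    - by apply/measurable_EFinP; exact: (intR_meas iH).
    - move=> w _; rewrite lee_fin /H -subr_ge0.
      have -> : c ^+ 2 + 2 * c * X w + 2 * c * Y w + 2 * X w ^+ 2 + 2 * Y w ^+ 2 -
        (c + X w + Y w) ^+ 2 = (X w - Y w) ^+ 2 by ring.
      exact: sqr_ge0.
  rewrite (RIE iH) C2 -EFinM -EFinD lee_fin.
  rewrite /H !RID; try solve_int.
  rewrite !RIZ; try solve_int. by rewrite !RI_cst EX EY; lra.
Qed.
End comp_bound.

Section batch.
Context dW (W : measurableType dW) dZ (Z : measurableType dZ) (R : realType)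
  (Q : probability W R) (P : probability Z R) (n : nat) (zeta : 'I_n -> W -> Z)
  (hz : iid_batch Q P zeta).

Lemma batch_var (phi : Z -> R) : measurable_fun setT phi ->
  P.-integrable setT (EFin \o phi) ->
  P.-integrable setT (EFin \o (fun z => phi z ^+ 2)) ->
  (\int[P]_z (phi z)%:E = 0)%E ->
  intR Q (fun w => \sum_(j < n) phi (zeta j w)) /\
  RI Q (fun w => \sum_(j < n) phi (zeta j w)) = 0 /\
  intR Q (fun w => (\sum_(j < n) phi (zeta j w)) ^+ 2) /\
  RI Q (fun w => (\sum_(j < n) phi (zeta j w)) ^+ 2) =
    n%:R * fine (\int[P]_z (phi z ^+ 2)%:E)%E.
Proof.
move=> mphi iphi iphi2 Ephi.
have mphi2 : measurable_fun setT (fun z => phi z ^+ 2) by exact: measurable_funX.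
have h1 : forall j, intR Q (fun w => phi (zeta j w)) /\ RI Q (fun w => phi (zeta j w)) = 0.
  move=> j; have [i e] := iid_int hz j mphi iphi.
  by split => //; rewrite /RI /Rintegral e Ephi.
have [iX EX] := intR_sum (index_enum 'I_n) (fun j w => phi (zeta j w)) (fun j => (h1 j).1).
have h2 : forall j l, intR Q (fun w => phi (zeta j w) * phi (zeta l w)) /\
    RI Q (fun w => phi (zeta j w) * phi (zeta l w)) =
    if j == l then fine (\int[P]_z (phi z ^+ 2)%:E)%E else 0.
  move=> j l; case: eqP => [<-|/eqP jl].
    have [i e] := iid_int hz j mphi2 iphi2.
    split; first by apply: (eq_intR _ i) => w; rewrite /= expr2.
    by rewrite /RI /Rintegral -e; congr fine; apply: eq_integral => w _; rewrite expr2.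
  have [i e] := iid_pair hz j l jl mphi mphi iphi iphi.
  by split => //; rewrite /RI /Rintegral e Ephi mul0e.
have h3 : forall j, intR Q (fun w => \sum_(l < n) phi (zeta j w) * phi (zeta l w)) /\
    RI Q (fun w => \sum_(l < n) phi (zeta j w) * phi (zeta l w)) =
    fine (\int[P]_z (phi z ^+ 2)%:E)%E.
  move=> j.
  have [i e] := intR_sum (index_enum 'I_n) (fun l w => phi (zeta j w) * phi (zeta l w))
    (fun l => (h2 j l).1).
  split => //; rewrite e.
  rewrite (bigD1 j) //= (h2 j j).2 eqxx big1 ?addr0 // => l lj.
  by rewrite (h2 j l).2 eq_sym (negbTE lj).
have [iX2 EX2] := intR_sum (index_enum 'I_n)
  (fun j w => \sum_(l < n) phi (zeta j w) * phi (zeta l w)) (fun j => (h3 j).1).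
have sqE : forall w, (\sum_(j < n) phi (zeta j w)) ^+ 2 =
    \sum_(j < n) \sum_(l < n) phi (zeta j w) * phi (zeta l w).
  by move=> w; rewrite expr2 mulr_suml; apply: eq_bigr => j _; rewrite mulr_sumr.
split => //; split; first by rewrite EX big1 // => j _; exact: (h1 j).2.
split; first by apply: (eq_intR _ iX2) => w; rewrite sqE.
rewrite (eq_RI _ sqE) EX2.
under eq_bigr do rewrite (h3 _).2.
by rewrite sumr_const card_ord mulr_natl.
Qed.
End batch.

Lemma gen_sum {dW} {W : measurableType dW} {dZ} {Z : measurableType dZ} {R : realType}
  {n : nat} (zeta : 'I_n -> W -> Z) (mz : forall j, measurable_fun setT (zeta j))
  (phi : Z -> R) (mphi : measurable_fun setT phi) :
  measurable_wrt (gen_sigma zeta) (fun w => \sum_(j < n) phi (zeta j w)).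
Proof.
pose G := \bigcup_(j in [set: 'I_n]) preimage_set_system setT (zeta j) measurable.
pose Wz := g_sigma_algebraType G.
have mzj : forall j, measurable_fun (setT : set Wz) (zeta j : Wz -> Z).
  move=> j _ Y mY; apply: sub_sigma_algebra; exists j => //; exists Y => //.
have H : measurable_fun (setT : set Wz) (fun w : Wz => \sum_(j < n) phi (zeta j w)).
  by apply: measurable_sum => j; exact: measurableT_comp.
move=> V mV; have := H measurableT V mV; by rewrite setTI.
Qed.

Lemma wrt_comp {W : Type} {R : realType} (F : set (set W)) (f : W -> R) (a : R -> R) :
  measurable_wrt F f -> measurable_fun setT a -> measurable_wrt F (a \o f).
Proof.
move=> hf ma V mV; rewrite comp_preimage; apply: hf.
by rewrite -[_ @^-1` _]setTI; exact: ma.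
Qed.

Section var.
Context (R : realType) (p : nat) (dZ : measure_display) (Z : measurableType dZ)
  (P : probability Z R) (Gs : 'rV[R]_p -> Z -> 'rV[R]_p) (G : 'rV[R]_p -> 'rV[R]_p)
  (L : R)
  (hGs_int : forall x i, P.-integrable setT (fun z => (Gs x z ord0 i)%:E))
  (hE : forall x i, G x ord0 i = Rintegral P setT (fun z => Gs x z ord0 i))
  (hAc : forall x y,
     (\int[P]_z (sqnorm (Gs x z - Gs y z))%:E <= (L ^+ 2 * sqnorm (x - y))%:E)%E).

Lemma gI x i : intR P (fun z => Gs x z ord0 i).
Proof. exact: hGs_int. Qed.

Lemma gE x i : RI P (fun z => Gs x z ord0 i) = G x ord0 i.
Proof. by rewrite hE. Qed.

Lemma gM x i : measurable_fun setT (fun z => Gs x z ord0 i).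
Proof. exact: intR_meas (gI x i). Qed.

Lemma sqI x y : intR P (fun z => sqnorm (Gs x z - Gs y z)) /\
  RI P (fun z => sqnorm (Gs x z - Gs y z)) <= L ^+ 2 * sqnorm (x - y).
Proof.
have sqE z : sqnorm (Gs x z - Gs y z) = \sum_(i < p) (Gs x z ord0 i - Gs y z ord0 i) ^+ 2.
  by rewrite /sqnorm; apply: eq_bigr => i _; rewrite !mxE.
have m : measurable_fun setT (fun z => sqnorm (Gs x z - Gs y z)).
  apply: (eq_measurable_fun (fun z => \sum_(i < p) (Gs x z ord0 i - Gs y z ord0 i) ^+ 2)).
    by move=> z _; rewrite sqE.
  apply: measurable_sum => i; apply: measurable_funX; apply: measurable_funB; exact: gM.
have i : intR P (fun z => sqnorm (Gs x z - Gs y z)).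
  apply: intR_ge0 => //.
    by move=> z; rewrite /sqnorm; apply: sumr_ge0 => j _; exact: sqr_ge0.
  by apply: le_lt_trans (hAc x y) _; exact: ltry.
split => //; rewrite -lee_fin -RIE //; exact: hAc.
Qed.

Lemma centered_bound x y i :
  intR P (fun z => ((Gs x z ord0 i - Gs y z ord0 i) - (G x ord0 i - G y ord0 i)) ^+ 2) /\
  RI P (fun z => ((Gs x z ord0 i - Gs y z ord0 i) - (G x ord0 i - G y ord0 i)) ^+ 2) <=
  RI P (fun z => (Gs x z ord0 i - Gs y z ord0 i) ^+ 2).
Proof.
have [iS _] := sqI x y.
set m := G x ord0 i - G y ord0 i.
have mA : measurable_fun setT (fun z => Gs x z ord0 i - Gs y z ord0 i).
  by apply: measurable_funB; exact: gM.
have iA : intR P (fun z => Gs x z ord0 i - Gs y z ord0 i) by apply: intRB; exact: gI.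
have EA : RI P (fun z => Gs x z ord0 i - Gs y z ord0 i) = m by rewrite RIB ?gE //; exact: gI.
have iA2 : intR P (fun z => (Gs x z ord0 i - Gs y z ord0 i) ^+ 2).
  apply: (intR_le _ _ iS); first exact: measurable_funX.
  move=> z; rewrite ger0_norm ?sqr_ge0 // /sqnorm (bigD1 i) //= !mxE lerDl.
  by apply: sumr_ge0 => j _; exact: sqr_ge0.
have e z : ((Gs x z ord0 i - Gs y z ord0 i) - m) ^+ 2 =
   (Gs x z ord0 i - Gs y z ord0 i) ^+ 2 + (-2 * m) * (Gs x z ord0 i - Gs y z ord0 i) + m ^+ 2.
  by ring.
have iB : intR P (fun z => (Gs x z ord0 i - Gs y z ord0 i) ^+ 2 +
    (-2 * m) * (Gs x z ord0 i - Gs y z ord0 i) + m ^+ 2) by solve_int.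
split; first by apply: (eq_intR _ iB) => z; rewrite e.
rewrite (eq_RI _ e) !RID; try solve_int.
rewrite RIZ // EA RI_cst; nra.
Qed.

Lemma psi_props (k0 : R) (y1 y2 y3 : 'rV[R]_p) (i : 'I_p) :
  let psi := fun z => k0 * (2 * (Gs y1 z ord0 i - G y1 ord0 i)
     - 3 * (Gs y2 z ord0 i - G y2 ord0 i) + (Gs y3 z ord0 i - G y3 ord0 i)) in
  [/\ measurable_fun setT psi, intR P psi, RI P psi = 0,
      intR P (fun z => psi z ^+ 2) &
      RI P (fun z => psi z ^+ 2) <= k0 ^+ 2 * (8 * RI P (fun z => (Gs y1 z ord0 i - Gs y2 z ord0 i) ^+ 2)
         + 2 * RI P (fun z => (Gs y2 z ord0 i - Gs y3 z ord0 i) ^+ 2))].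
Proof.
move=> psi.
have g1 := gI y1 i; have g2 := gI y2 i; have g3 := gI y3 i.
have ip : intR P psi by rewrite /psi; apply: intRZ; apply: intRD; [apply: intRB|];
  try (apply: intRZ); apply: intRB => //; exact: intR_cst.
have mp : measurable_fun setT psi by exact: intR_meas ip.
have [ia la] := centered_bound y1 y2 i.
have [ib lb] := centered_bound y2 y3 i.
set a := fun z => ((Gs y1 z ord0 i - Gs y2 z ord0 i) - (G y1 ord0 i - G y2 ord0 i)) ^+ 2.
set b := fun z => ((Gs y2 z ord0 i - Gs y3 z ord0 i) - (G y2 ord0 i - G y3 ord0 i)) ^+ 2.
have hb : forall z, psi z ^+ 2 <= k0 ^+ 2 * (8 * a z + 2 * b z).
  move=> z; rewrite /psi /a /b.
  set u := Gs y1 z ord0 i - G y1 ord0 i.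
  set v := Gs y2 z ord0 i - G y2 ord0 i.
  set t := Gs y3 z ord0 i - G y3 ord0 i.
  have -> : (Gs y1 z ord0 i - Gs y2 z ord0 i - (G y1 ord0 i - G y2 ord0 i)) = u - v.
    by rewrite /u /v; ring.
  have -> : (Gs y2 z ord0 i - Gs y3 z ord0 i - (G y2 ord0 i - G y3 ord0 i)) = v - t.
    by rewrite /v /t; ring.
  have -> : (k0 * (2 * u - 3 * v + t)) ^+ 2 = k0 ^+ 2 * (2 * (u - v) - (v - t)) ^+ 2 by ring.
  apply: ler_wpM2l; first exact: sqr_ge0.
  have := sqr_ge0 (2 * (u - v) + (v - t)); nra.
have iq : intR P (fun z => k0 ^+ 2 * (8 * a z + 2 * b z)) by solve_int.
have ip2 : intR P (fun z => psi z ^+ 2).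
  apply: (intR_le _ _ iq); first exact: measurable_funX.
  by move=> z; rewrite ger0_norm ?sqr_ge0 // hb.
have c1 : RI P (fun z => Gs y1 z ord0 i - G y1 ord0 i) = 0.
  by rewrite RIB ?gE ?RI_cst ?subrr //; exact: intR_cst.
have c2 : RI P (fun z => Gs y2 z ord0 i - G y2 ord0 i) = 0.
  by rewrite RIB ?gE ?RI_cst ?subrr //; exact: intR_cst.
have c3 : RI P (fun z => Gs y3 z ord0 i - G y3 ord0 i) = 0.
  by rewrite RIB ?gE ?RI_cst ?subrr //; exact: intR_cst.
have i1 : intR P (fun z => Gs y1 z ord0 i - G y1 ord0 i) by apply: intRB => //; exact: intR_cst.
have i2 : intR P (fun z => Gs y2 z ord0 i - G y2 ord0 i) by apply: intRB => //; exact: intR_cst.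
have i3 : intR P (fun z => Gs y3 z ord0 i - G y3 ord0 i) by apply: intRB => //; exact: intR_cst.
split => //.
- rewrite /psi RIZ; last by apply: intRD => //; apply: intRB; exact: intRZ.
  rewrite RID; last 2 first.
  + by apply: intRB; exact: intRZ.
  + exact: i3.
  rewrite c3 addr0 RIB; try exact: intRZ.
  by rewrite !RIZ // c1 c2 !mulr0 subrr mulr0.
- apply: (le_trans (le_Rintegral _ _ _ _)).
  + exact: measurableT.
  + exact: ip2.
  + exact: iq.
  + by move=> z _; exact: hb.
  rewrite -/(RI P _) RIZ; last by solve_int.
  rewrite RID; try solve_int.
  rewrite !RIZ //; apply: ler_wpM2l; first exact: sqr_ge0.
  by apply: lerD; apply: ler_wpM2l.
Qed.


Lemma A2I x y i : intR P (fun z => (Gs x z ord0 i - Gs y z ord0 i) ^+ 2).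
Proof.
have [iS _] := sqI x y.
apply: (intR_le _ _ iS).
  by apply: measurable_funX; apply: measurable_funB; exact: gM.
move=> z; rewrite ger0_norm ?sqr_ge0 // /sqnorm (bigD1 i) //= !mxE lerDl.
by apply: sumr_ge0 => j _; exact: sqr_ge0.
Qed.

Lemma sqsum x y : \sum_(i < p) RI P (fun z => (Gs x z ord0 i - Gs y z ord0 i) ^+ 2)
  <= L ^+ 2 * sqnorm (x - y).
Proof.
have [_ e] := intR_sum (index_enum 'I_p)
  (fun i z => (Gs x z ord0 i - Gs y z ord0 i) ^+ 2) (fun i => A2I x y i).
rewrite -e; have [_ le] := sqI x y; apply: le_trans le.
by rewrite le_eqVlt; apply/orP; left; apply/eqP; apply: eq_RI => z;
  rewrite /sqnorm; apply: eq_bigr => i _; rewrite !mxE.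
Qed.

Lemma psi_sum (k0 : R) (y1 y2 y3 : 'rV[R]_p) :
  \sum_(i < p) RI P (fun z => (k0 * (2 * (Gs y1 z ord0 i - G y1 ord0 i)
     - 3 * (Gs y2 z ord0 i - G y2 ord0 i) + (Gs y3 z ord0 i - G y3 ord0 i))) ^+ 2)
  <= k0 ^+ 2 * (8 * (L ^+ 2 * sqnorm (y1 - y2)) + 2 * (L ^+ 2 * sqnorm (y2 - y3))).
Proof.
apply: (@le_trans _ _ (\sum_(i < p) k0 ^+ 2 *
    (8 * RI P (fun z => (Gs y1 z ord0 i - Gs y2 z ord0 i) ^+ 2)
     + 2 * RI P (fun z => (Gs y2 z ord0 i - Gs y3 z ord0 i) ^+ 2)))).
  apply: ler_sum => i _.
  by case: (psi_props k0 y1 y2 y3 i).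
rewrite -mulr_sumr; apply: ler_wpM2l; first exact: sqr_ge0.
rewrite big_split /= -!mulr_sumr.
by apply: lerD; apply: ler_wpM2l => //; exact: sqsum.
Qed.

End var.

Theorem mainTheorem8
  (R : realType) (p : nat)
  (dZ : measure_display) (Z : measurableType dZ) (P : probability Z R)
  (Gs : 'rV[R]_p -> Z -> 'rV[R]_p) (G : 'rV[R]_p -> 'rV[R]_p)
  (sigma L : R)
  (* setting (E): G x = E_zeta[ Gs(x, zeta) ] *)
  (hGs_int : forall x i, P.-integrable setT (fun z => (Gs x z ord0 i)%:E))
  (hE : forall x i, G x ord0 i = Rintegral P setT (fun z => Gs x z ord0 i))
  (* Assumption A(b) *)
  (hAb : forall x, (\int[P]_z (sqnorm (Gs x z - G x))%:E <= (sigma ^+ 2)%:E)%E)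
  (* Assumption A(c) *)
  (hAc : forall x y,
     (\int[P]_z (sqnorm (Gs x z - Gs y z))%:E <= (L ^+ 2 * sqnorm (x - y))%:E)%E)
  (* the scheme VrFRBS *)
  (eta : R) (heta : 0 < eta) (T : 'rV[R]_p -> set 'rV[R]_p)
  (x0 xi0 : 'rV[R]_p) (hxi0 : T x0 xi0)
  (* fresh randomness of one iteration: space W with law Q; a run is h : nat -> W *)
  (dW : measure_display) (W : measurableType dW) (Q : probability W R)
  (b bh : nat) (hb : (0 < b)%N) (hbh : (0 < bh)%N)
  (zeta : 'I_b -> W -> Z) (zetah : 'I_bh -> W -> Z)
  (hzeta : iid_batch Q P zeta) (hzetah : iid_batch Q P zetah)
  (om : R) (hom : 0 < om <= 1)
  (Sbar : nat -> (nat -> W) -> 'rV[R]_p)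
  (x : nat -> (nat -> W) -> 'rV[R]_p)
  (hx0 : forall h, x 0%N h = x0)
  (hx_adapt : forall k, adapted_at k (x k))
  (hx_step : forall k h,
     in_resolvent eta T (x k h - eta *: Stil Gs G om zeta Sbar x k h) (x k.+1 h))
  (* Sbar^k depends on the past and on the fresh mini-batch ^B_k only *)
  (hSbar_adapt : forall k, adapted_at k.+1 (Sbar k))
  (hSbar_built : forall k h i,
     measurable_wrt (gen_sigma zetah) (fun w => Sbar k (upd h k w) ord0 i))
  (hSbar_meas : forall k h i, measurable_fun setT (fun w => Sbar k (upd h k w) ord0 i))
  (* E_{^B_k}[Sbar^k] = S^k *)
  (hSbar_int : forall k h i,
     Q.-integrable setT (fun w => (Sbar k (upd h k w) ord0 i)%:E))
  (hSbar_unb : forall k h i,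
     Ek Q k (fun h' => Sbar k h' ord0 i) h = Sk G x k h ord0 i)
  (C : R)
  (hC : (C = 1 /\ indep_sigma Q (gen_sigma zeta) (gen_sigma zetah)) \/ C = 2) :
  let Stl := Stil Gs G om zeta Sbar x in
  let e := fun k h => Stl k h - Sk G x k h in
  let e_prev := fun k h => match k with 0 => 0 | k'.+1 => e k' h end in
  let Delta := fun k h => sqnorm (e k h) in
  let Delta_prev := fun k h => match k with 0 => 0 | k'.+1 => Delta k' h end in
  let sigma2 := fun k h => Ek_nn Q k (fun h' => sqnorm (Sbar k h' - Sk G x k h')) h in
  let tau := om in
  let kappa := om * (2 - om) in
  let Theta := 8%:R * C * (1 - om) ^+ 2 * L ^+ 2 / b%:R in
  let Thetah := 2%:R * C * (1 - om) ^+ 2 * L ^+ 2 / b%:R in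
  let delta := fun k h => ((C * om ^+ 2)%:E * sigma2 k h)%E in
  [/\ 0 < tau <= 1, 0 < kappa <= 1, 0 <= Theta, 0 <= Thetah &
  forall k h,
    [/\ forall i, Q.-integrable setT (fun w => (e k (upd h k w) ord0 i)%:E)
                  /\ Ek Q k (fun h' => e k h' ord0 i) h = (1 - tau) * e_prev k h ord0 i,
        (Ek_nn Q k (fun h' => sqnorm (e k h')) h <= Ek_nn Q k (Delta k) h)%E &
        (Ek_nn Q k (Delta k) h <=
           ((1 - kappa) * Delta_prev k h
            + Theta * sqnorm (x k h - x k.-1 h)
            + Thetah * sqnorm (x k.-1 h - x k.-2 h))%:E + delta k h)%E]].
Proof.
move=> Stl e e_prev Delta Delta_prev sigma2 tau kappa Theta Thetah delta.
have [om0 om1] : 0 < om /\ om <= 1 by case/andP: hom.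
have C0 : 0 <= C by case: hC => [[-> _]|->].
have b0 : 0 < b%:R :> R by rewrite ltr0n.
split.
- exact: hom.
- by apply/andP; split; rewrite /kappa; nra.
- rewrite /Theta; apply: divr_ge0; [|exact: ltW]; apply: mulr_ge0; [apply: mulr_ge0; [apply: mulr_ge0|]|]; rewrite ?sqr_ge0 //.
- rewrite /Thetah; apply: divr_ge0; [|exact: ltW]; apply: mulr_ge0; [apply: mulr_ge0; [apply: mulr_ge0|]|]; rewrite ?sqr_ge0 //.
have Sadapt : forall k0 h1 h2, (forall j, (j < k0.+1)%N -> h1 j = h2 j) ->
    Stl k0 h1 = Stl k0 h2.
  elim=> [|k0 IH] h1 h2 eqh.
    have x0e : x 0%N h1 = x 0%N h2 by apply: hx_adapt.
    rewrite /Stl /= x0e (eqh 0%N) // (hSbar_adapt 0%N h1 h2) //.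
  have xa : forall m, (m <= k0.+1)%N -> x m h1 = x m h2.
    move=> m hm; apply: hx_adapt => j hj; apply: eqh.
    by apply: (leq_trans hj); apply: (leq_trans hm).
  have -> : Stl k0.+1 h1 = (1 - om) *: (Stl k0 h1
      + 2%:R *: GB Gs (fun j => zeta j (h1 k0.+1)) (x k0.+1 h1)
      - 3%:R *: GB Gs (fun j => zeta j (h1 k0.+1)) (x k0 h1)
      + GB Gs (fun j => zeta j (h1 k0.+1)) (x k0.-1 h1)) + om *: Sbar k0.+1 h1 by [].
  have -> : Stl k0.+1 h2 = (1 - om) *: (Stl k0 h2
      + 2%:R *: GB Gs (fun j => zeta j (h2 k0.+1)) (x k0.+1 h2)
      - 3%:R *: GB Gs (fun j => zeta j (h2 k0.+1)) (x k0 h2)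
      + GB Gs (fun j => zeta j (h2 k0.+1)) (x k0.-1 h2)) + om *: Sbar k0.+1 h2 by [].
  rewrite (IH h1 h2); last by move=> j hj; apply: eqh; exact: ltnW.
  rewrite (xa k0.+1) // (xa k0) // (xa k0.-1); last by apply: (leq_trans (leq_pred _)).
  by rewrite (eqh k0.+1) // (hSbar_adapt k0.+1 h1 h2).
pose prevS := fun k0 h0 => match k0 with 0%N => G (x 0%N h0) | k'.+1 => Stl k' h0 end.
have SE : forall k0 h0, Stl k0 h0 = (1 - om) *: (prevS k0 h0
      + 2%:R *: GB Gs (fun j => zeta j (h0 k0)) (x k0 h0)
      - 3%:R *: GB Gs (fun j => zeta j (h0 k0)) (x k0.-1 h0)
      + GB Gs (fun j => zeta j (h0 k0)) (x k0.-2 h0)) + om *: Sbar k0 h0.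
  by case.
have eprevE : forall k0 h0, e_prev k0 h0 = prevS k0 h0 - Sk G x k0.-1 h0.
  case=> [|k0] h0 //=.
  by rewrite /Sk /= scaler_nat mulr2n addrK subrr.
move=> k h.
have updk : forall w, upd h k w k = w by move=> w; rewrite /upd eqxx.
have updlt : forall w j, (j < k)%N -> upd h k w j = h j.
  by move=> w j hj; rewrite /upd (ltn_eqF hj).
have xw : forall w m, (m <= k)%N -> x m (upd h k w) = x m h.
  move=> w m hm; apply: hx_adapt => j hj; apply: updlt; exact: leq_trans hj hm.
have prevw : forall w, prevS k (upd h k w) = prevS k h.
  move=> w; case: (k) updlt xw => [|k'] ul xw' /=; first by rewrite xw'.
  by apply: Sadapt => j hj; exact: ul.
have Skw : forall w, Sk G x k (upd h k w) = Sk G x k h.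
  by move=> w; rewrite /Sk !xw // leq_pred.
pose k0 := (1 - om) / b%:R.
pose psi := fun i z => k0 * (2 * (Gs (x k h) z ord0 i - G (x k h) ord0 i)
     - 3 * (Gs (x k.-1 h) z ord0 i - G (x k.-1 h) ord0 i)
     + (Gs (x k.-2 h) z ord0 i - G (x k.-2 h) ord0 i)).
pose cc := fun i => (1 - om) * e_prev k h ord0 i.
pose Xf := fun i w => \sum_(j < b) psi i (zeta j w).
pose Yf := fun i w => om * (Sbar k (upd h k w) ord0 i - Sk G x k h ord0 i).
have decomp : forall i w, e k (upd h k w) ord0 i = cc i + Xf i w + Yf i w.
  move=> i w.
  rewrite /e Skw SE prevw updk !xw ?leq_pred ?(leq_trans (leq_pred _) (leq_pred _)) //.
  rewrite /cc eprevE /Xf /Yf /psi -mulr_sumr /GB.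
  rewrite !mxE !summxE ?mxE.
  rewrite !big_split /= sumrN -!mulr_sumr !sumrB !sumr_const card_ord.
  rewrite /k0; set bb := b%:R.
  have nb : forall y : R, y *+ b = y * bb by move=> y; rewrite /bb mulr_natr.
  rewrite !nb; field.
  by apply: lt0r_neq0.
have PF : forall i, [/\ measurable_fun setT (psi i), intR P (psi i), RI P (psi i) = 0,
    intR P (fun z => psi i z ^+ 2) &
    RI P (fun z => psi i z ^+ 2) <= k0 ^+ 2 *
      (8 * RI P (fun z => (Gs (x k h) z ord0 i - Gs (x k.-1 h) z ord0 i) ^+ 2)
     + 2 * RI P (fun z => (Gs (x k.-1 h) z ord0 i - Gs (x k.-2 h) z ord0 i) ^+ 2))].
  by move=> i; exact: (@psi_props R p dZ Z P Gs G L hGs_int hE hAc k0 (x k h) (x k.-1 h) (x k.-2 h) i).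
have XF : forall i, [/\ intR Q (Xf i), RI Q (Xf i) = 0, intR Q (fun w => Xf i w ^+ 2) &
    RI Q (fun w => Xf i w ^+ 2) = b%:R * RI P (fun z => psi i z ^+ 2)].
  move=> i; have [mp ip Ep ip2 _] := PF i.
  have Ep' : (\int[P]_z (psi i z)%:E = 0)%E by rewrite (RIE ip) Ep.
  have [iX [EX [iX2 EX2]]] := @batch_var _ _ _ _ _ Q P b zeta hzeta (psi i) mp ip ip2 Ep'.
  by split.
have YF : forall i, intR Q (Yf i) /\ RI Q (Yf i) = 0.
  move=> i.
  have iS : intR Q (fun w => Sbar k (upd h k w) ord0 i) by exact: hSbar_int.
  have iSS : intR Q (fun w => Sbar k (upd h k w) ord0 i - Sk G x k h ord0 i).
    by apply: intRB => //; exact: intR_cst.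
  split; first exact: intRZ.
  rewrite /Yf RIZ // RIB //; last exact: intR_cst.
  rewrite RI_cst.
  have -> : RI Q (fun w => Sbar k (upd h k w) ord0 i) = Sk G x k h ord0 i.
    exact: (hSbar_unb k h i).
  by rewrite subrr mulr0.
have EF : forall i, intR Q (fun w => e k (upd h k w) ord0 i) /\
    RI Q (fun w => e k (upd h k w) ord0 i) = cc i.
  move=> i; have [iX EX _ _] := XF i; have [iY EY] := YF i.
  have iT : intR Q (fun w => cc i + Xf i w + Yf i w).
    by apply: intRD => //; apply: intRD => //; exact: intR_cst.
  split; first by apply: (eq_intR _ iT) => w; rewrite decomp.
  rewrite (eq_RI (fun w => cc i + Xf i w + Yf i w)); last exact: decomp.
  rewrite !RID //.
  - by rewrite RI_cst EX EY !addr0.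
  - exact: intR_cst.
  - by apply: intRD => //; exact: intR_cst.
split.
- move=> i; have [iE EE] := EF i; split; first exact: iE.
  by rewrite /tau; exact: EE.
- exact: lexx.
have DPE : Delta_prev k h = sqnorm (e_prev k h).
  rewrite /Delta_prev /e_prev; case: (k) => [|k'] //=.
  by rewrite /sqnorm big1 // => i _; rewrite mxE expr0n.
have meY2 : forall i, measurable_fun setT (fun w => Yf i w ^+ 2).
  by move=> i; apply: measurable_funX; exact: (intR_meas (YF i).1).
have JF : forall i, (\int[Q]_w ((Yf i w) ^+ 2)%:E =
    (om ^+ 2)%:E * \int[Q]_w ((Sbar k (upd h k w) ord0 i - Sk G x k h ord0 i) ^+ 2)%:E)%E.
  move=> i; rewrite -ge0_integralZl_EFin //; last by apply: sqr_ge0.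
  - by apply: eq_integral => w _; rewrite /Yf exprMn.
  - by move=> w _; rewrite lee_fin sqr_ge0.
  - apply/measurable_EFinP; apply: measurable_funX; apply: measurable_funB.
      exact: (intR_meas (hSbar_int k h i)).
    exact: measurable_cst.
have sigE : sigma2 k h = (\sum_(i < p)
    \int[Q]_w ((Sbar k (upd h k w) ord0 i - Sk G x k h ord0 i) ^+ 2)%:E)%E.
  rewrite /sigma2 /Ek_nn.
  rewrite (eq_integral (fun w => \sum_(i < p)
    ((Sbar k (upd h k w) ord0 i - Sk G x k h ord0 i) ^+ 2)%:E)%E); last first.
    by move=> w _; rewrite /sqnorm -sumEFin Skw; apply: eq_bigr => i _; rewrite !mxE.
  rewrite ge0_integral_sum //.
  - move=> i; apply/measurable_EFinP; apply: measurable_funX; apply: measurable_funB.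
      exact: (intR_meas (hSbar_int k h i)).
    exact: measurable_cst.
  - by move=> i w _; rewrite lee_fin sqr_ge0.
rewrite /Ek_nn /Delta.
rewrite (eq_integral (fun w => \sum_(i < p) ((cc i + Xf i w + Yf i w) ^+ 2)%:E)%E); last first.
  by move=> w _; rewrite /sqnorm -sumEFin; apply: eq_bigr => i _; rewrite decomp.
rewrite ge0_integral_sum //; last 2 first.
- move=> i; apply/measurable_EFinP; apply: measurable_funX.
  apply: measurable_funD; last exact: (intR_meas (YF i).1).
  apply: measurable_funD; first exact: measurable_cst.
  by have [iX _ _ _] := XF i; exact: (intR_meas iX).
- by move=> i w _; rewrite lee_fin sqr_ge0.
apply: (@le_trans _ _ (\sum_(i < p) ((cc i ^+ 2 + C * RI Q (fun w => Xf i w ^+ 2))%:E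
   + C%:E * \int[Q]_w ((Yf i w) ^+ 2)%:E))%E).
  apply: lee_sum => i _.
  have [iX EX iX2 _] := XF i; have [iY EY] := YF i.
  apply: comp_bound => //.
  case: hC => [[C1 hind]|C2]; [left|by right].
  split => // A B mA mB; apply: hind.
  + have [mp _ _ _ _] := PF i.
    exact: (gen_sum zeta (iid_meas hzeta) (psi i) mp).
  + apply: (@wrt_comp _ _ _ (fun w => Sbar k (upd h k w) ord0 i)
        (fun s => om * (s - Sk G x k h ord0 i))) => //.
    apply: measurable_funM; first exact: measurable_cst.
    by apply: measurable_funB; [exact: measurable_id|exact: measurable_cst].
rewrite big_split /= sumEFin.
under eq_bigr do rewrite JF muleA -EFinM.
rewrite -ge0_sume_distrr; last by move=> i _; apply: integral_ge0 => w _; rewrite lee_fin sqr_ge0.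
rewrite /delta sigE; apply: leeD; last exact: lexx.
rewrite lee_fin big_split /=.
have e1 : \sum_(i < p) cc i ^+ 2 = (1 - kappa) * Delta_prev k h.
  rewrite DPE /sqnorm mulr_sumr; apply: eq_bigr => i _.
  by rewrite /cc /kappa exprMn; congr (_ * _); ring.
rewrite e1 -addrA lerD2l.
have e2 : \sum_(i < p) C * RI Q (fun w => Xf i w ^+ 2) =
    C * b%:R * \sum_(i < p) RI P (fun z => psi i z ^+ 2).
  rewrite -mulrA mulr_sumr mulr_sumr; apply: eq_bigr => i _.
  by have [_ _ _ ->] := XF i; rewrite mulrA.
rewrite e2.
have hs := @psi_sum R p dZ Z P Gs G L hGs_int hE hAc k0 (x k h) (x k.-1 h) (x k.-2 h).
apply: le_trans.
  apply: ler_wpM2l; first by apply: mulr_ge0 => //; exact: ltW.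
  exact: hs.
rewrite /Theta /Thetah /k0.
set n1 := sqnorm (x k h - x k.-1 h); set n2 := sqnorm (x k.-1 h - x k.-2 h).
rewrite le_eqVlt; apply/orP; left; apply/eqP.
field; exact: lt0r_neq0.
Qed.
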